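(* Let $q$ be a prime power, $n\ge1$, and $k$ an integer with $\frac{q-1}{2}<k<q-1$. Then \[\dim(\operatorname{Hull}(C_{n,k}^q))=\dim(C_{n,k}^q)-(2k+1-(q-1))=\binom{n+k}{k}-(2k+1-(q-1)).\] Moreover, $\{\operatorname{ev}(m)\}_{m\in\mathcal{M}}$ is a basis of $\operatorname{Hull}(C_{n,k}^q)$, where $\mathcal{M}$ is the set of all monomials of degree $k$ in $x_0,\dots,x_n$ except the monomials $x_{n-1}^{k-a}x_n^{a}$ with $q-1-k\le a\le k$.
   Context: For a prime power $q$ and integers $n\ge 1$, $k\ge 0$, the projective Reed-Muller code $C_{n,k}^q\subseteq \mathbb{F}_q^N$, $N=\frac{q^{n+1}-1}{q-1}$, is defined as follows. For each point of $\mathbb{P}^n(\mathbb{F}_q)$ choose the affine representative $(p_0,\dots,p_n)\in\mathbb{F}_q^{n+1}\setminus\{0\}$ whose left-most nonzero coordinate equals $1$, and fix an ordering $P_1',\dots,P_N'$ of these representatives; for a polynomial $F$ write $\operatorname{ev}(F)=(F(P_1'),\dots,F(P_N'))$. Then $C_{n,k}^q=\{\operatorname{ev}(F) : F\in \mathbb{F}_q[x_0,\dots,x_n]_k\}$, where $\mathbb{F}_q[x_0,\dots,x_n]_k$ is the space of homogeneous polynomials of degree $k$ together with $0$. Duals are with respect to the standard dot product, and $\operatorname{Hull}(C)=C\cap C^\perp$. *)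

(* Defs.v *)
From HB Require Import structures.
From mathcomp Require Import all_boot all_order all_algebra.
From mathcomp Require Import mpoly.
Set Implicit Arguments. Unset Strict Implicit. Unset Printing Implicit Defensive.
Import Order.TTheory GRing.Theory.
Local Open Scope ring_scope.

Section ProjRM.
Variables (F : finFieldType) (n : nat).

(* x is the normalized representative of a projective point of P^n(F):
   x is nonzero and its left-most nonzero coordinate equals 1. *)
Definition is_proj_rep (x : {ffun 'I_n.+1 -> F}) : bool :=
  [exists i : 'I_n.+1, (x i == 1) && [forall j : 'I_n.+1, (j < i)%N ==> (x j == 0)]].

Definition PPoint := {x : {ffun 'I_n.+1 -> F} | is_proj_rep x}.

Definition Npts : nat := #|{: PPoint}|.

(* ev(f) = (f(P'_1), ..., f(P'_N)); the ordering of points is the one given by enum. *)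
Definition ev (p : {mpoly F[n.+1]}) : 'rV[F]_Npts :=
  \row_(j < Npts) p.@[ (val (enum_val j) : 'I_n.+1 -> F) ].

(* C (a square matrix whose row space is meant to be a code) is the projective
   Reed-Muller code C_{n,k}^q : its row space is { ev(f) : f homogeneous of degree k or 0 }. *)
Definition is_PRM_code (k : nat) (C : 'M[F]_Npts) : Prop :=
  forall v : 'rV[F]_Npts,
    (v <= C)%MS <-> exists p : {mpoly F[n.+1]}, p \is k.-homog /\ v = ev p.

Definition dual_code (C : 'M[F]_Npts) : 'M[F]_Npts := kermx C^T.

Definition hull (C : 'M[F]_Npts) : 'M[F]_Npts := (C :&: dual_code C)%MS.

Definition excluded_mon (k : nat) (m : 'X_{1..n.+1}) : bool :=
  [exists a : 'I_k.+1, ((#|F|.-1 - k)%N <= a)%N &&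
     (m == [multinom (if (i : nat) == n.-1 then (k - a)%N
                      else if (i : nat) == n then (a : nat) else 0%N) | i < n.+1])].

Definition deg_mons (k : nat) : seq 'X_{1..n.+1} :=
  map val [seq m <- enum {: 'X_{1..n.+1 < k.+1}} | mdeg (val m) == k].

Definition calM (k : nat) : seq 'X_{1..n.+1} :=
  [seq m <- deg_mons k | ~~ excluded_mon k m].

Definition calM_mx (k : nat) : 'M[F]_(size (calM k), Npts) :=
  \matrix_(i < size (calM k)) ev 'X_[nth 0%MM (calM k) i].

End ProjRM.

(* Main.v *)
Require Import Defs.
From HB Require Import structures.
From mathcomp Require Import all_boot all_order all_algebra.
From mathcomp Require Import mpoly.
From mathcomp Require Import all_field zify.
Set Implicit Arguments. Unset Strict Implicit. Unset Printing Implicit Defensive.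
Import Order.TTheory GRing.Theory.
Local Open Scope ring_scope.



Section PowSum.
Variable F : finFieldType.
Local Notation q := #|F|.

Definition sig (e : nat) : F := \sum_(t : F) t ^+ e.

Lemma q_gt1 : (1 < q)%N.
Proof.
have : (#|[set (0%R : F); 1%R]| <= q)%N by apply: max_card.
by rewrite cards2 eq_sym oner_neq0.
Qed.

Lemma card_F0 : (q%:R : F) = 0.
Proof.
have [p pp cp] := finPcharP F.
have := card_pprimeChar cp => /= Hq.
apply/eqP; rewrite -(dvdn_pcharf cp).
have Hl : (0 < logn p q)%N.
  case E: (logn p q) => [|l] //.
  move: Hq; rewrite E expn0 => Hq1.
  by move: q_gt1; rewrite Hq1.
by rewrite Hq dvdn_exp.
Qed.

Lemma sig0 : sig 0 = 0.
Proof.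
rewrite /sig (eq_bigr (fun _ => 1)) // sumr_const.
by rewrite -[X in X *+ _]/(1 : F) card_F0.
Qed.

Lemma unit_pow (x : F) : x != 0 -> x ^+ q.-1 = 1.
Proof.
move=> nx; apply: (mulIf nx); rewrite mul1r -exprSr prednK ?expf_card //.
by apply: ltn_trans q_gt1.
Qed.

Lemma sig_qm1 : sig q.-1 = -1.
Proof.
rewrite /sig (bigD1 0) //= expr0n.
have -> : (q.-1 == 0)%N = false by case: q q_gt1 => [|[|]].
rewrite add0r (eq_bigr (fun _ => 1)); last by move=> t /unit_pow.
rewrite sumr_const.
have -> : #|[pred i : F | i != 0]| = q.-1 by rewrite -(cardC1 0).
apply/eqP; rewrite -subr_eq0 opprK -mulrSr prednK; first by rewrite card_F0 eqxx.
by apply: ltn_trans q_gt1.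
Qed.

Lemma sig_small e : (0 < e < q.-1)%N -> sig e = 0.
Proof.
case/andP=> e0 eq.
pose p : {poly F} := 'X^e - 1%:P.
have pn0 : p != 0 by rewrite -size_poly_eq0 size_XnsubC.
have : ~~ all (root p) (enum [pred t : F | t != 0]).
  apply/negP=> Hall.
  have := max_poly_roots pn0 Hall (enum_uniq _).
  by rewrite size_XnsubC // -cardE cardC1 ltnS leqNgt eq.
case/allPn=> c; rewrite mem_enum inE => cn0.
rewrite /root /p !hornerE subr_eq0 => Hc.
have H : sig e = c ^+ e * sig e.
  rewrite /sig mulr_sumr (reindex_inj (mulfI cn0)) /=.
  by apply: eq_bigr=> t _; rewrite exprMn.
have : (c ^+ e - 1) * sig e == 0 by rewrite mulrBl mul1r -H subrr.
by rewrite mulf_eq0 subr_eq0 (negbTE Hc) => /eqP.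
Qed.

Lemma sig_big e : (q.-1 < e < (q.-1).*2)%N -> sig e = 0.
Proof.
case/andP=> e1 e2.
have -> : sig e = sig (e - q.-1).
  apply: eq_bigr=> t _.
  have [->|tn0] := eqVneq t 0.
    rewrite !expr0n; have -> : (e == 0)%N = false by case: (e) e1.
    by rewrite subn_eq0 leqNgt e1.
  by rewrite -{1}(subnKC (ltnW e1)) exprD unit_pow // mul1r.
apply: sig_small; rewrite subn_gt0 e1 /=.
by rewrite ltn_subLR ?addnn //; apply: ltnW.
Qed.

Lemma sig_val e : (e < (q.-1).*2)%N -> sig e = - (e == q.-1)%:R.
Proof.
move=> e2.
have q1 : (0 < q.-1)%N by case: q q_gt1 => [|[|]].
case: (ltngtP e q.-1) => He.
- have [->|e0] := posnP e; first by rewrite sig0 oppr0.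
  by rewrite sig_small ?e0 ?He // oppr0.
- by rewrite sig_big ?He // oppr0.
- by rewrite He sig_qm1.
Qed.
End PowSum.



Section Pivot.
Variables (F : finFieldType) (n : nat).

Definition Ssum (e : 'I_n.+1 -> nat) : F :=
  \sum_(x : PPoint F n) \prod_j (val x : 'I_n.+1 -> F) j ^+ e j.

Definition piv (i : 'I_n.+1) (f : {ffun 'I_n.+1 -> F}) : bool :=
  (f i == 1) && [forall j : 'I_n.+1, (j < i)%N ==> (f j == 0)].

Lemma piv_uniq i i' f : piv i f -> piv i' f -> i = i'.
Proof.
wlog lt : i i' / (i <= i')%N.
  move=> H Hi Hi'; case: (leqP i i') => [le|/ltnW le]; first exact: H.
  by apply/esym/H.
move=> /andP[Hi _] /andP[_ /forallP Hi'].
apply: val_inj; apply/eqP; rewrite eqn_leq lt /= leqNgt; apply/negP=> lt'.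
by move: (implyP (Hi' i) lt'); rewrite (eqP Hi) oner_eq0.
Qed.

Lemma proj_rep_piv f : ((is_proj_rep f)%:R : F) = \sum_i (piv i f)%:R.
Proof.
case: (boolP (is_proj_rep f)) => [/existsP[i0 Hi0]|H].
  have Hp : piv i0 f := Hi0; rewrite (bigD1 i0) //= Hp big1 ?addr0 // => i ne.
  case: (boolP (piv i f)) => // Hi.
  by rewrite (piv_uniq Hi Hi0) eqxx in ne.
rewrite big1 // => i _; case: (boolP (piv i f)) => // Hi.
by case/negP: H; apply/existsP; exists i.
Qed.

Lemma prod_bool (I : finType) (b : I -> bool) :
  \prod_i ((b i)%:R : F) = [forall i, b i]%:R.
Proof.
case: (boolP [forall i, b i]) => [/forallP H|/forallPn[i Hi]].
  by rewrite big1 // => i _; rewrite H.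
by rewrite (bigD1 i) //= (negbTE Hi) mul0r.
Qed.

Lemma Ssum_pivot e : Ssum e = \sum_(i : 'I_n.+1) \prod_(j : 'I_n.+1)
   (if (j < i)%N then (e j == 0)%:R else if j == i then 1 else sig F (e j)).
Proof.
pose G (f : {ffun 'I_n.+1 -> F}) := \prod_j f j ^+ e j.
have step1 : Ssum e = \sum_(f | is_proj_rep f) G f.
  rewrite (reindex_omap (val : PPoint F n -> _) insub); last first.
    by move=> f Hf; rewrite insubT.
  by apply: eq_bigl=> x; rewrite (valP x) valK eqxx.
pose H (i j : 'I_n.+1) (t : F) :=
  if (j < i)%N then (t == 0)%:R * t ^+ e j
  else if j == i then (t == 1)%:R * t ^+ e j else t ^+ e j.
have step2 : forall f, (is_proj_rep f)%:R * G f = \sum_i \prod_j H i j (f j).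
  move=> f; rewrite proj_rep_piv mulr_suml; apply: eq_bigr=> i _.
  rewrite /G /H.
  rewrite [RHS](eq_bigr (fun j : 'I_n.+1 => (if (j < i)%N then f j == 0 else if j == i then f j == 1 else true)%:R * f j ^+ e j)); last first.
    by move=> j _; case: ifP => // _; case: ifP => // _; rewrite mul1r.
  rewrite big_split /= prod_bool; congr (_ * _); congr (_%:R); congr (nat_of_bool _).
  apply/idP/forallP=> [/andP[H1 /forallP H2] j|H2].
    case: ifPn => [lt|_]; first exact: (implyP (H2 j)).
    by case: ifPn => // /eqP->.
  apply/andP; split; first by move: (H2 i); rewrite ltnn eqxx.
  apply/forallP=> j; apply/implyP=> lt; by move: (H2 j); rewrite lt.
rewrite step1 big_mkcond /=.
rewrite (eq_bigr (fun f => (is_proj_rep f)%:R * G f)); last first.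
  by move=> f _; case: ifP => _; rewrite ?mul1r ?mul0r.
rewrite (eq_bigr _ (fun f _ => step2 f)) exchange_big /=.
apply: eq_bigr=> i _.
rewrite -bigA_distr_bigA /=.
apply: eq_bigr=> j _; rewrite /H.
case: ifP => lt.
  rewrite (bigD1 0) //= eqxx mul1r big1 ?addr0 ?expr0n // => t /negbTE ->.
  by rewrite mul0r.
case: ifP => eq.
  rewrite (bigD1 1) //= eqxx mul1r expr1n big1 ?addr0 // => t /negbTE ->.
  by rewrite mul0r.
by [].
Qed.
End Pivot.



Section Dot.
Variables (F : finFieldType) (n : nat).

Definition Mx (s : seq 'X_{1..n.+1}) : 'M[F]_(size s, Npts F n) :=
  \matrix_(i < size s) @ev F n 'X_[nth 0%MM s i].

Lemma dotX (m m' : 'X_{1..n.+1}) :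
  \sum_(l < Npts F n) (@ev F n 'X_[m]) 0 l * (@ev F n 'X_[m']) 0 l
  = Ssum F (fun j => (m + m')%MM j).
Proof.
rewrite /Ssum /Npts [RHS](eq_bigl (fun x => x \in predT)) // [RHS](big_enum_val (I := PPoint F n)) /=.
apply: eq_bigr=> x _; rewrite !mxE !mevalX -big_split /=.
by apply: eq_bigr=> j _; rewrite mnmDE exprD.
Qed.

Lemma mulmx_entry r r' (u : 'I_r -> 'X_{1..n.+1}) (v : 'I_r' -> 'X_{1..n.+1}) i j :
  ((\matrix_(i < r) @ev F n 'X_[u i]) *m (\matrix_(j < r') @ev F n 'X_[v j])^T) i j
  = Ssum F (fun l => (u i + v j)%MM l).
Proof.
rewrite mxE -dotX; apply: eq_bigr=> l _; by rewrite !mxE.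
Qed.
End Dot.



Section Deg.
Variables (F : finFieldType) (n k : nat).
Hypothesis n1 : (1 <= n)%N.
Hypothesis hk1 : (#|F|.-1 < 2 * k)%N.
Hypothesis hk2 : (k < #|F|.-1)%N.
Local Notation q1 := (#|F|.-1).

Definition imax : 'I_n.+1 := ord_max.
Definition i1 : 'I_n.+1 := inord n.-1.

Lemma i1E : (i1 : nat) = n.-1.
Proof. by rewrite inordK //; lia. Qed.

Lemma imaxE : (imax : nat) = n. Proof. by []. Qed.

Lemma sum3 (f : 'I_n.+1 -> nat) :
  (\sum_j f j = f imax + f i1 + \sum_(j : 'I_n.+1 | (j < n.-1)%N) f j)%N.
Proof.
rewrite (bigD1 imax) //= (bigD1 i1) /=; last by rewrite -val_eqE /= i1E; lia.
rewrite addnA; congr (_ + _)%N; apply: eq_bigl=> j.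
rewrite -!val_eqE /= i1E; have := ltn_ord j; lia.
Qed.

Definition y (a : nat) : 'X_{1..n.+1} :=
  [multinom (if (i : nat) == n.-1 then (k - a)%N
             else if (i : nat) == n then a else 0%N) | i < n.+1].

Lemma y_imax a : y a imax = a.
Proof. rewrite mnmE ?imaxE; have -> : (n == n.-1) = false by lia. by rewrite eqxx. Qed.

Lemma y_i1 a : y a i1 = (k - a)%N.
Proof. by rewrite mnmE i1E eqxx. Qed.

Lemma y_low a (j : 'I_n.+1) : (j < n.-1)%N -> y a j = 0%N.
Proof. rewrite mnmE => lt; have -> : ((j:nat) == n.-1) = false by lia. by have -> : ((j:nat) == n) = false by lia. Qed.

Lemma mdeg_y a : (a <= k)%N -> mdeg (y a) = k.
Proof.
move=> ak; rewrite mdegE sum3 y_imax y_i1 big1 => [|j /y_low //]; lia.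
Qed.

Lemma mnm_le_mdeg (m : 'X_{1..n.+1}) j : (m j <= mdeg m)%N.
Proof. by rewrite mdegE (bigD1 j) //= leq_addr. Qed.

Lemma mnm2_le_mdeg (m : 'X_{1..n.+1}) : (m imax + m i1 <= mdeg m)%N.
Proof. by rewrite mdegE sum3 leq_addr. Qed.

Definition lowz (m : 'X_{1..n.+1}) := [forall j : 'I_n.+1, (j < n.-1)%N ==> (m j == 0%N)].

Lemma lowz_y a : lowz (y a).
Proof. by apply/forallP=> j; apply/implyP=> /y_low ->. Qed.

Lemma y_form (m : 'X_{1..n.+1}) : mdeg m = k -> lowz m -> m = y (m imax).
Proof.
move=> dm /forallP lz; apply/mnmP=> j.
have : (k = m imax + m i1)%N.
  by rewrite -dm mdegE sum3 big1 ?addn0 // => i /(implyP (lz i)) /eqP.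
rewrite mnmE => Hk.
case: (ltnP j n.-1) => [lt|ge].
  have h1 : ((j:nat) == n.-1) = false by lia.
  have h2 : ((j:nat) == n) = false by lia.
  by rewrite h1 h2 (eqP (implyP (lz j) lt)).
case: (eqVneq (j:nat) n.-1) => [e|ne].
  have -> : j = i1 by apply: val_inj; rewrite /= i1E.
  lia.
have ej : (j : nat) = n by have := ltn_ord j; lia.
have -> : j = imax by apply: val_inj.
by rewrite imaxE eqxx.
Qed.

Lemma y_inj a b : y a = y b -> a = b.
Proof. by move=> E; rewrite -(y_imax a) E y_imax. Qed.

Lemma sig_e (e : nat) : (e <= 2 * k)%N -> sig F e = - (e == q1)%:R.
Proof. move=> le; apply: sig_val; lia. Qed.

Lemma prod_bool_cond (I : finType) (P : pred I) (b : I -> bool) :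
  \prod_(i | P i) ((b i)%:R : F) = [forall i, P i ==> b i]%:R.
Proof.
rewrite big_mkcond /= -prod_bool; apply: eq_bigr=> i _.
by case: (P i).
Qed.

Lemma S2 (e : 'X_{1..n.+1}) : mdeg e = (2 * k)%N ->
  Ssum F (fun j => e j) = sig F (e imax) * (lowz e)%:R
     + [forall j : 'I_n.+1, (j < n)%N ==> (e j == 0%N)]%:R.
Proof.
move=> de; rewrite Ssum_pivot (bigD1 imax) //= [X in _ + X](bigD1 i1) /=; last first.
  by rewrite -val_eqE /= i1E; lia.
have hi1 : i1 != imax by rewrite -val_eqE /= i1E; lia.
rewrite [X in _ + (_ + X)]big1 ?addr0; last first.
  move=> i /andP[ni1 ni2].
  have lt : (i < n.-1)%N.
    move: ni1 ni2; rewrite -!val_eqE /= i1E; have := ltn_ord i; lia.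
  have [jz [Hz1 Hz2]] : exists jz : 'I_n.+1, (i < jz)%N /\ e jz != q1.
    case: (eqVneq (e imax) q1) => Em; last by exists imax; split => //; rewrite ?imaxE; lia.
    exists i1; split; first by rewrite i1E; lia.
    apply/eqP=> E1; have := mnm2_le_mdeg e; rewrite de Em E1; lia.
  rewrite (bigD1 jz) //=.
  have -> : (jz < i)%N = false by lia.
  have -> : (jz == i) = false by apply/negbTE; rewrite -val_eqE /=; lia.
  rewrite sig_e; first by rewrite (negbTE Hz2) oppr0 mul0r.
  by rewrite -de mnm_le_mdeg.
rewrite addrC; congr (_ + _).
  rewrite (bigD1 imax) //=.
  have -> : (imax < i1)%N = false by rewrite i1E ?imaxE; lia.
  have -> : (imax == i1) = false by rewrite eq_sym (negbTE hi1).
  congr (_ * _).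
  rewrite (eq_bigr (fun i : 'I_n.+1 => ((i < n.-1)%N ==> (e i == 0%N))%:R)); last first.
    move=> i ni; rewrite i1E; case: ifP => lt; first by [].
    case: ifP => [_|ne]; first by [].
    move: ni ne lt; rewrite -!val_eqE /= i1E ?imaxE; have := ltn_ord i; lia.
  rewrite prod_bool_cond; congr (_%:R); congr (nat_of_bool _).
  apply/forallP/forallP => H j.
    apply/implyP=> lt; have := implyP (H j); rewrite lt -val_eqE /= ?imaxE.
    have -> : ((j : nat) != n) by lia.
    by move=> /(_ isT).
  by apply/implyP=> _; apply: H.
rewrite -prod_bool; apply: eq_bigr=> j _.
case: ifP => // lt; have -> : j == imax by rewrite -val_eqE /=; have := ltn_ord j; lia.
by [].
Qed.

Lemma lowzD (m m' : 'X_{1..n.+1}) : lowz (m + m') -> lowz m.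
Proof.
move=> /forallP H; apply/forallP=> j; apply/implyP=> lt.
by move: (implyP (H j) lt); rewrite mnmDE addn_eq0 => /andP[].
Qed.

Lemma G1 (m m' : 'X_{1..n.+1}) : mdeg m = k -> mdeg m' = k ->
  ~~ excluded_mon F k m -> Ssum F (fun j => (m + m')%MM j) = 0.
Proof.
move=> dm dm' nex.
have key : forall a, (a <= k)%N -> m = y a -> (a < q1 - k)%N.
  move=> a ak E; rewrite ltnNge; apply/negP=> le; case/negP: nex.
  apply/existsP; exists (Ordinal (ak : (a < k.+1)%N)); by rewrite /= le E eqxx.
have mk : (m imax <= k)%N by rewrite -dm mnm_le_mdeg.
rewrite (S2 (e := (m + m')%MM)); last by rewrite mdegD dm dm'; lia.
have -> : [forall j : 'I_n.+1, (j < n)%N ==> ((m + m')%MM j == 0%N)] = false.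
  apply/negP=> /forallP H.
  have lz : lowz m.
    apply: (@lowzD m m'); apply/forallP=> j; apply/implyP=> lt.
    by apply: (implyP (H j)); lia.
  have E := y_form dm lz.
  have : (m i1 == 0%N).
    by move: (implyP (H i1)); rewrite i1E mnmDE addn_eq0 => /(_ ltac:(lia)) /andP[].
  rewrite E y_i1 subn_eq0 => mk'.
  have := key _ mk E; lia.
rewrite addr0.
case: (boolP (lowz (m + m'))) => lz; last by rewrite mulr0.
have E := y_form dm (lowzD lz).
have := key _ mk E => lt.
rewrite sig_e; last by rewrite mnmDE; have := mnm_le_mdeg m' imax; lia.
have -> : ((m + m')%MM imax == q1) = false.
  by rewrite mnmDE; have := mnm_le_mdeg m' imax; lia.
by rewrite oppr0 mul0r.
Qed.

Lemma lowz_Dy (m : 'X_{1..n.+1}) b : lowz (m + y b) = lowz m.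
Proof.
apply/forallP/forallP=> H j; apply/implyP=> lt; have := implyP (H j) lt;
  by rewrite mnmDE y_low // addn0.
Qed.

Lemma G2 (m : 'X_{1..n.+1}) b : mdeg m = k -> (b <= k)%N -> (q1 - k <= b)%N ->
  Ssum F (fun j => (m + y b)%MM j)
  = - (m == y (q1 - b))%:R + ((b == k) && (m == y k))%:R.
Proof.
move=> dm bk lb.
have mk : (m imax <= k)%N by rewrite -dm mnm_le_mdeg.
rewrite (S2 (e := (m + y b)%MM)); last by rewrite mdegD dm mdeg_y //; lia.
congr (_ + _).
  rewrite sig_e; last by rewrite mnmDE y_imax; lia.
  rewrite lowz_Dy mnmDE y_imax.
  have H : ((m imax + b == q1) && lowz m) = (m == y (q1 - b)).
    apply/andP/eqP=> [[E L]|E].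
      by rewrite (y_form dm L); congr y; lia.
    by rewrite E y_imax lowz_y; split => //; lia.
  rewrite -H; case: (m imax + b == q1); case: (lowz m);
    by rewrite ?mulr0 ?mulr1 ?oppr0.
congr (_%:R); congr (nat_of_bool _).
apply/forallP/andP => [H|[Eb Em] j].
  have lz : lowz m.
    apply/forallP=> j; apply/implyP=> lt; have := implyP (H j) ltac:(lia).
    by rewrite mnmDE addn_eq0 => /andP[].
  have := implyP (H i1); rewrite i1E mnmDE y_i1 addn_eq0 => /(_ ltac:(lia)) /andP[/eqP h1 h2].
  have E := y_form dm lz.
  move: h1; rewrite E y_i1 => h1.
  split; first by lia.
  by apply/eqP; congr y; lia.
apply/implyP=> lt; rewrite mnmDE (eqP Em) (eqP Eb).
case: (ltnP j n.-1) => lt'; first by rewrite y_low.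
have -> : j = i1 by apply: val_inj; rewrite /= i1E; lia.
by rewrite y_i1 subnn.
Qed.
End Deg.



Section Indep.
Variables (F : finFieldType) (n k : nat).
Hypothesis hk2 : (k < #|F|.-1)%N.
Local Notation q1 := (#|F|.-1).

Definition g (m : 'X_{1..n.+1}) : 'X_{1..n.+1} :=
  [multinom (if (i : nat) == 0%N then 1%N else (q1 - m i)%N) | i < n.+1].

Lemma Sind (m m' : 'X_{1..n.+1}) : mdeg m = k -> mdeg m' = k ->
  Ssum F (fun j => (m + g m')%MM j) = (m == m')%:R * (-1) ^+ n.
Proof.
move=> dm dm'.
rewrite Ssum_pivot (bigD1 ord0) //= [X in _ + X]big1 ?addr0; last first.
  move=> i ni0; rewrite (bigD1 ord0) //=.
  have -> : (0 < i)%N by rewrite lt0n; move: ni0; rewrite -val_eqE.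
  by rewrite mnmDE mnmE /= addn1 mul0r.
rewrite (bigD1 ord0) //= mul1r.
rewrite (eq_bigr (fun j => - ((m j == m' j)%:R))); last first.
  move=> j nj0.
  have jp : (j != 0%N :> nat) by move: nj0; rewrite -val_eqE.

  rewrite (negbTE nj0) mnmDE mnmE (negbTE jp).
  have h1 := mnm_le_mdeg m j; have h2 := mnm_le_mdeg m' j.
  rewrite sig_val; last by lia.
  congr (- (_%:R)); apply/eqP/eqP; lia.
case: (eqVneq m m') => [<-|ne].
  rewrite (eq_bigr (fun _ => -1)); last by move=> j _; rewrite eqxx.
  rewrite mul1r (eq_bigl (fun j => j \in predC1 ord0)) // prodr_const cardC1 card_ord.
  by [].
case: (boolP [exists j : 'I_n.+1, (j != ord0) && (m j != m' j)]) => [/existsP[j /andP[nj Hj]]|/existsPn H].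
  by rewrite (bigD1 j) //= (negbTE Hj) oppr0 !mul0r.
case/eqP: ne.
have Hall : forall j : 'I_n.+1, j != ord0 -> m j = m' j.
  move=> j nj; move: (H j); rewrite negb_and nj /= negbK => /eqP.
  by [].
apply/mnmP=> j; case: (eqVneq j ord0) => [->|nj]; last exact: Hall.
move: dm'; rewrite -dm !mdegE (bigD1 ord0) //= [in RHS](bigD1 ord0) //=.
rewrite (eq_bigr (fun j => m j)); first by move/eqP; rewrite eqn_add2r => /eqP.
by move=> i /Hall.
Qed.

Lemma indep (s : seq 'X_{1..n.+1}) : uniq s -> all (fun m => mdeg m == k) s ->
  row_free (Mx F s).
Proof.
move=> us ds.
pose W := \matrix_(j < size s) @ev F n 'X_[g (nth 0%MM s j)].
have E : Mx F s *m W^T = (-1) ^+ n *: 1%:M.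
  apply/matrixP=> i j; rewrite mulmx_entry Sind; last first.
  - by apply/eqP; apply: (allP ds); apply: mem_nth.
  - by apply/eqP; apply: (allP ds); apply: mem_nth.
  by rewrite !mxE nth_uniq // mulrC.
apply/eqP/anti_leq; rewrite rank_leq_row /=.
have := mxrankM_maxl (Mx F s) W^T; rewrite E mxrank_scale_nz ?mxrank1 //.
by rewrite signr_eq0.
Qed.
End Indep.



Section Code.
Variables (F : finFieldType) (n k : nat).

Lemma deg_mons_mem m : (m \in deg_mons n k) = (mdeg m == k).
Proof.
apply/mapP/idP => [[x]|H].
  by rewrite mem_filter => /andP[H _] ->.
have H' : (mdeg m < k.+1)%N by rewrite (eqP H).
exists (@BMultinom _ k.+1 m H') => //.
by rewrite mem_filter mem_enum /= H.
Qed.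

Lemma deg_mons_uniq : uniq (deg_mons n k).
Proof. rewrite (map_inj_uniq val_inj). by rewrite filter_uniq ?enum_uniq. Qed.

Lemma size_deg_mons : size (deg_mons n k) = 'C(n + k, k).
Proof.
rewrite addnC -size_basis; apply: perm_size.
apply: uniq_perm; [exact: deg_mons_uniq | exact: uniq_basis | ].
by move=> m; rewrite deg_mons_mem basis_cover.
Qed.

Lemma ev0 : @ev F n 0 = 0.
Proof. by apply/rowP=> j; rewrite !mxE meval0. Qed.
Lemma evD p p' : @ev F n (p + p') = ev p + ev p'.
Proof. by apply/rowP=> j; rewrite !mxE mevalD. Qed.
Lemma evZ c p : @ev F n (c *: p) = c *: ev p.
Proof. by apply/rowP=> j; rewrite !mxE mevalZ. Qed.
Lemma ev_sum (I : Type) (r : seq I) (P : pred I) (f : I -> {mpoly F[n.+1]}) :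
  ev (\sum_(i <- r | P i) f i) = \sum_(i <- r | P i) ev (f i).
Proof. exact: (big_morph _ evD ev0). Qed.

Lemma evX_sub_Mx (s : seq 'X_{1..n.+1}) m : m \in s -> (@ev F n 'X_[m] <= Mx F s)%MS.
Proof.
move=> ms; have lt : (index m s < size s)%N by rewrite index_mem.
have -> : @ev F n 'X_[m] = row (Ordinal lt) (Mx F s) by rewrite rowK /= nth_index.
exact: row_sub.
Qed.

Lemma code_B v : (v <= Mx F (deg_mons n k))%MS <->
  exists p : {mpoly F[n.+1]}, p \is k.-homog /\ v = ev p.
Proof.
split.
  move/submxP=> [c ->]; rewrite mulmx_sum_row.
  exists (\sum_i c 0 i *: 'X_[nth 0%MM (deg_mons n k) i]); split.
    apply: rpred_sum => i _; apply: rpredZ; rewrite dhomogX -deg_mons_mem.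
    exact: mem_nth.
  by rewrite ev_sum; apply: eq_bigr=> i _; rewrite evZ rowK.
move=> [p [hp ->]]; rewrite (mpolyE p) ev_sum big_seq.
apply: summx_sub => m mp; rewrite evZ; apply: scalemx_sub.
apply: evX_sub_Mx; rewrite deg_mons_mem; apply/eqP.
exact: (dhomogP _ _ _ hp).
Qed.
End Code.



Section Main.
Variables (F : finFieldType) (n k : nat).
Hypothesis n1 : (1 <= n)%N.
Hypothesis hk1 : (#|F|.-1 < 2 * k)%N.
Hypothesis hk2 : (k < #|F|.-1)%N.
Local Notation q1 := (#|F|.-1).
Local Notation DM := (deg_mons n k).
Local Notation BB := (Mx F (deg_mons n k)).
Local Notation yy := (@y n k).

Lemma y_in a : (a <= k)%N -> yy a \in DM.
Proof. by move=> ak; rewrite deg_mons_mem (mdeg_y n1 hk1 hk2). Qed.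

Lemma excl_y m : excluded_mon F k m = [exists a : 'I_k.+1, (q1 - k <= a)%N && (m == yy a)].
Proof. by []. Qed.

Lemma calM_mem m : (m \in calM F n k) = (mdeg m == k) && ~~ excluded_mon F k m.
Proof. by rewrite mem_filter deg_mons_mem andbC. Qed.

Lemma calM_uniq : uniq (calM F n k).
Proof. by rewrite filter_uniq // deg_mons_uniq. Qed.

Lemma rf_calM : row_free (Mx F (calM F n k)).
Proof.
apply: (indep hk2); first exact: calM_uniq.
by apply/allP=> m; rewrite calM_mem => /andP[].
Qed.

Lemma rf_B : row_free BB.
Proof.
apply: (indep hk2); first exact: deg_mons_uniq.
by apply/allP=> m; rewrite deg_mons_mem.
Qed.

Lemma count_excl : (size (calM F n k) + (2 * k + 1 - q1) = size DM)%N.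
Proof.
rewrite -(count_predC (fun m => excluded_mon F k m) DM) addnC size_filter.
congr (_ + _)%N.
rewrite -size_filter.
have -> : (2 * k + 1 - q1 = size (map yy (iota (q1 - k) (2 * k + 1 - q1))))%N.
  by rewrite size_map size_iota.
apply: perm_size; apply: uniq_perm.
- rewrite map_inj_in_uniq ?iota_uniq // => a b _ _; exact: (y_inj n1 hk1 hk2).
- by rewrite filter_uniq // deg_mons_uniq.
move=> m; apply/esym; rewrite mem_filter excl_y; apply/andP/mapP.
  move=> [/existsP[a /andP[le /eqP->]] _]; exists (a : nat) => //.
  by rewrite mem_iota; have := ltn_ord a; lia.
move=> [a]; rewrite mem_iota => /andP[l1 l2] ->.
have ak : (a < k.+1)%N by lia.
split; last by apply: y_in; lia.
by apply/existsP; exists (Ordinal ak); rewrite /= l1 eqxx.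
Qed.

Lemma MB_orth : Mx F (calM F n k) *m BB^T = 0.
Proof.
apply/matrixP=> i j; rewrite /Mx mulmx_entry [RHS]mxE.
have Hi := mem_nth 0%MM (ltn_ord i); rewrite calM_mem in Hi.
case/andP: Hi => /eqP d1 nex.
have Hj := mem_nth 0%MM (ltn_ord j); rewrite deg_mons_mem in Hj.
exact: (G1 n1 hk1 hk2 d1 (eqP Hj) nex).
Qed.

Definition idx (w : 'X_{1..n.+1}) (hw : w \in DM) : 'I_(size DM) :=
  Ordinal (etrans (index_mem w DM) hw).

Lemma sum_pick (c : 'rV[F]_(size DM)) w (hw : w \in DM) :
  \sum_l c 0 l * (nth 0%MM DM l == w)%:R = c 0 (idx hw).
Proof.
rewrite (bigD1 (idx hw)) //= nth_index // eqxx mulr1 big1 ?addr0 // => l nl.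
suff -> : (nth 0%MM DM l == w) = false by rewrite mulr0.
rewrite -(nth_index 0%MM hw) nth_uniq ?deg_mons_uniq ?index_mem //.
by apply/negbTE; move: nl; rewrite -val_eqE.
Qed.

Lemma idx_nth (l : 'I_(size DM)) (h : nth 0%MM DM l \in DM) : idx h = l.
Proof. by apply: val_inj; rewrite /= index_uniq // deg_mons_uniq. Qed.

Lemma hull_sub (C : 'M[F]_(Npts F n)) : (C == BB)%MS -> (hull C <= Mx F (calM F n k))%MS.
Proof.
move=> /andP[CB BC]; apply/row_subP => i.
set v := row i (hull C).
have vC : (v <= C)%MS by apply: submx_trans (row_sub _ _) (capmxSl _ _).
have vK : v *m C^T = 0 by apply/sub_kermxP; apply: submx_trans (row_sub _ _) (capmxSr _ _).
have vB : (v <= BB)%MS := submx_trans vC CB.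
have vBt : v *m BB^T = 0.
  by rewrite -(mulmxKpV BC) trmx_mul mulmxA vK mul0mx.
set c := v *m pinvmx BB.
have vE : v = c *m BB by rewrite /c mulmxKpV.
have EQ : forall b, (b <= k)%N -> (q1 - k <= b)%N ->
    forall (h1 : yy (q1 - b) \in DM) (h2 : yy k \in DM),
    - c 0 (idx h1) + (b == k)%:R * c 0 (idx h2) = 0.
  move=> b bk lb h1 h2.
  have hb : yy b \in DM by apply: y_in.
  have S : (v *m BB^T) 0 (idx hb) = 0 by rewrite vBt mxE.
  rewrite vE -mulmxA mxE in S.
  rewrite -S; symmetry.
  rewrite (eq_bigr (fun l => c 0 l * (- (nth 0%MM DM l == yy (q1 - b))%:R
                    + ((b == k) && (nth 0%MM DM l == yy k))%:R))); last first.
    move=> l _; rewrite /Mx mulmx_entry /= nth_index //.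
    have Hl := mem_nth 0%MM (ltn_ord l); rewrite deg_mons_mem in Hl.
    by rewrite (G2 n1 hk1 hk2 (eqP Hl) bk lb).
  rewrite (eq_bigr (fun l => - (c 0 l * (nth 0%MM DM l == yy (q1 - b))%:R)
               + (b == k)%:R * (c 0 l * (nth 0%MM DM l == yy k)%:R))); last first.
    move=> l _; rewrite mulrDr mulrN; congr (_ + _).
    by case: (b == k); rewrite ?mul0r ?mul1r /= ?mulr0.
  by rewrite big_split /= sumrN -mulr_sumr !sum_pick.
have Z : forall a (ha : yy a \in DM), (a <= k)%N -> (q1 - k <= a)%N -> c 0 (idx ha) = 0.
  have Z1 : forall a (ha : yy a \in DM), (a <= k)%N -> (q1 - k < a)%N -> c 0 (idx ha) = 0.
    move=> a ha ak la.
    have := EQ (q1 - a)%N ltac:(lia) ltac:(lia).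
    have -> : (q1 - (q1 - a) = a)%N by lia.
    move=> /(_ ha (y_in (leqnn k))).
    have -> : ((q1 - a)%N == k) = false by lia.
    by rewrite mul0r addr0 => /eqP; rewrite oppr_eq0 => /eqP.
  move=> a ha ak la; case: (ltnP (q1 - k) a) => l2; first exact: Z1.
  have ea : a = (q1 - k)%N by lia.
  have := EQ k (leqnn k) ltac:(lia).
  have hk : yy k \in DM by apply: y_in.
  subst a; move=> /(_ ha hk); rewrite eqxx mul1r (Z1 k hk) //; last by lia.
  by rewrite addr0 => /eqP; rewrite oppr_eq0 => /eqP.
rewrite vE mulmx_sum_row; apply: summx_sub => l _.
case: (boolP (excluded_mon F k (nth 0%MM DM l))) => [ex|nex].
  case/existsP: ex => a /andP[la /eqP Ea].
  have hl : nth 0%MM DM l \in DM by apply: mem_nth.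
  have Ea' : nth 0%MM DM l = yy a := Ea.
  have ha : yy a \in DM by apply: y_in; have := ltn_ord a; lia.
  have -> : l = idx ha.
    rewrite -(idx_nth hl); apply: val_inj; by rewrite /= Ea'.
  rewrite Z //; last by have := ltn_ord a; lia.
  by rewrite scale0r sub0mx.
apply: scalemx_sub; rewrite rowK; apply: evX_sub_Mx.
rewrite calM_mem nex andbT; have := mem_nth 0%MM (ltn_ord l).
by rewrite deg_mons_mem.
Qed.
End Main.

Theorem mainTheorem10 (F : finFieldType) (n k : nat) :
  (1 <= n)%N -> (#|F|.-1 < 2 * k)%N -> (k < #|F|.-1)%N ->
  (exists C : 'M[F]_(Npts F n), is_PRM_code k C) /\
  (forall C : 'M[F]_(Npts F n), is_PRM_code k C ->
     [/\ (\rank (hull C) + (2 * k + 1 - #|F|.-1) = \rank C)%N,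
         \rank C = 'C(n + k, k),
         row_free (calM_mx F n k)
       & (calM_mx F n k == hull C)%MS]).
Proof.
move=> n1 hk1 hk2; split.
  exists (<<Mx F (deg_mons n k)>>%MS) => v; rewrite genmxE; exact: code_B.
move=> C HC.
have CB : (C == Mx F (deg_mons n k))%MS.
  apply/andP; split; apply/row_subP=> i.
    by apply/(code_B k _).2; apply: (HC _).1; apply: row_sub.
  by apply/(HC _).2; apply/(code_B k _).1; apply: row_sub.
have MH : (Mx F (calM F n k) <= hull C)%MS.
  rewrite sub_capmx; apply/andP; split.
    apply: submx_trans (proj2 (andP CB)).
    apply/row_subP=> i; rewrite rowK; apply: evX_sub_Mx.
    by have := mem_nth 0%MM (ltn_ord i); rewrite mem_filter => /andP[].
  apply/sub_kermxP; rewrite -(mulmxKpV (proj1 (andP CB))) trmx_mul mulmxA.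
  by rewrite (MB_orth n1 hk1 hk2) mul0mx.
have eqMH : (calM_mx F n k == hull C)%MS.
  by apply/andP; split; [exact: MH | exact: (hull_sub n1 hk1 hk2 CB)].
have rB := eqP (rf_B n hk2); have rM := eqP (rf_calM n hk2).
split => //.
- rewrite -(eqmx_rank eqMH) (eqmx_rank CB) rB.
  have -> : \rank (calM_mx F n k) = size (calM F n k) by exact: rM.
  exact: (count_excl n1 hk1 hk2).
- by rewrite (eqmx_rank CB) rB size_deg_mons.
- exact: (rf_calM n hk2).
Qed.
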